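(* The edge topology is not symmetric in general: there exist a scene (number of agents $N_a\ge 2$, horizon $T_f\ge 2$, current poses $(p_n,\theta_n)\in\mathbb{R}^2\times\mathbb{R}$ and future trajectories $Y_n=(y_n^1,\dots,y_n^{T_f})$, $y_n^t\in\mathbb{R}^2$) and indices $i\neq j$ such that $e_{ij}\neq e_{ji}$, where $e_{ij}$ is defined as in the context.
   Context: For $\alpha\in\mathbb{R}$, $R(\alpha)$ denotes the $2\times 2$ counterclockwise rotation matrix by angle $\alpha$. The local coordinate map of agent $n$ is $f^n(y)=R(-\theta_n)(y-p_n)$ for $y\in\mathbb{R}^2$, and the lateral coordinate $\ell^n(y)$ is the second component of $f^n(y)$. For agents $i,j$, an observer agent $n$, and a step $t\in\{2,\dots,T_f\}$, the intertwine indicator $I^{(n)}_t(i,j)$ equals $1$ if the closed line segment in $\mathbb{R}^2$ from $(t-1,\ell^n(y_i^{t-1}))$ to $(t,\ell^n(y_i^{t}))$ intersects the closed line segment from $(t-1,\ell^n(y_j^{t-1}))$ to $(t,\ell^n(y_j^{t}))$, and $0$ otherwise. The edge topology is $e_{ij}=\max_{2\le t\le T_f} I^{(i)}_t(i,j)\in\{0,1\}$, i.e. the interaction of agent $j$ with agent $i$ is assessed in agent $i$'s local frame. *)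

(* Defs.v *)
From Stdlib Require Import Reals List Arith ClassicalEpsilon.
Open Scope R_scope.

Definition pt := (R * R)%type.

Definition rot (alpha : R) (v : pt) : pt :=
  (cos alpha * fst v - sin alpha * snd v, sin alpha * fst v + cos alpha * snd v).

Definition local_coord (p : pt) (theta : R) (y : pt) : pt :=
  rot (- theta) (fst y - fst p, snd y - snd p).

Definition lateral (p : pt) (theta : R) (y : pt) : R := snd (local_coord p theta y).

Definition segments_intersect (a b c d : pt) : Prop :=
  exists s u : R, 0 <= s <= 1 /\ 0 <= u <= 1 /\
    (1 - s) * fst a + s * fst b = (1 - u) * fst c + u * fst d /\
    (1 - s) * snd a + s * snd b = (1 - u) * snd c + u * snd d.

Definition indic (P : Prop) : nat :=
  if excluded_middle_informative P then 1%nat else 0%nat.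

(* A scene: poses p n, theta n, and trajectories y n t (agent n, step t, t = 1..Tf). *)
Definition intertwine (p : nat -> pt) (theta : nat -> R) (y : nat -> nat -> pt)
  (n i j t : nat) : nat :=
  let l := fun z => lateral (p n) (theta n) z in
  indic (segments_intersect
           (INR (t - 1), l (y i (t - 1)%nat)) (INR t, l (y i t))
           (INR (t - 1), l (y j (t - 1)%nat)) (INR t, l (y j t))).

Definition edge (Tf : nat) (p : nat -> pt) (theta : nat -> R) (y : nat -> nat -> pt)
  (i j : nat) : nat :=
  fold_right Nat.max 0%nat (map (fun t => intertwine p theta y i i j t) (seq 2 (Tf - 1))).

(* Main.v *)
Require Import Defs.
From Stdlib Require Import Reals List Arith Lra Lia ClassicalEpsilon.
Open Scope R_scope.

Definition th (n : nat) : R := match n with 0%nat => 0 | _ => PI/2 end.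
Definition yy (n t : nat) : pt :=
  match n with
  | 0%nat => (0,0)
  | _ => match t with 1%nat => (1,-1) | _ => (1,1) end
  end.

Lemma lat0 (z : pt) : lateral (0,0) 0 z = snd z.
Proof. unfold lateral, local_coord, rot; simpl. rewrite Ropp_0, cos_0, sin_0. ring. Qed.

Lemma lat1 (z : pt) : lateral (0,0) (PI/2) z = - fst z.
Proof. unfold lateral, local_coord, rot; simpl. rewrite sin_neg, cos_neg, sin_PI2, cos_PI2. ring. Qed.

Theorem theorem3 :
  exists (Na Tf : nat) (p : nat -> pt) (theta : nat -> R) (y : nat -> nat -> pt) (i j : nat),
    (2 <= Na)%nat /\ (2 <= Tf)%nat /\ (i < Na)%nat /\ (j < Na)%nat /\ i <> j /\
    edge Tf p theta y i j <> edge Tf p theta y j i.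
Proof.
  exists 2%nat, 2%nat, (fun _ => (0,0)), th, yy, 0%nat, 1%nat.
  repeat split; try lia.
  unfold edge, intertwine, indic. simpl (seq 2 (2-1)). simpl map. simpl fold_right.
  destruct (excluded_middle_informative _) as [H1|H1];
  destruct (excluded_middle_informative _) as [H2|H2]; simpl; try lia.
  - exfalso. destruct H2 as [s [u [Hs [Hu [E1 E2]]]]].
    simpl th in E2. rewrite !lat1 in E2. simpl in E2. lra.
  - exfalso. apply H1. exists (1/2), (1/2).
    simpl th. rewrite !lat0. simpl. lra.
Qed.
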